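(* Let $d>1$ be an integer, let $q$ be a square power of an odd prime $p$ with $q \equiv 1 \pmod{2d}$, and let $\chi$ be a multiplicative character of $\mathbb{F}_q$ of order $d$. If the clique number of $GP(q,d)$ is $\sqrt{q}$, then the Gauss sum $G(\chi^j)$ is pure for every positive integer $j$.
   Context: $GP(q,d)$ is the graph on $\mathbb{F}_q$ in which distinct $x,y$ are adjacent iff $x-y$ is a $d$-th power in $\mathbb{F}_q^*$. For a multiplicative character $\chi$ (with $\chi(0)=0$ when $\chi$ is nontrivial, and the trivial character $\chi_0$ taking value $1$ on $\mathbb{F}_q^*$), $G(\chi)=\sum_{c\in\mathbb{F}_q}\chi(c)e_p(\operatorname{Tr}(c))$, where $\operatorname{Tr}$ is the absolute trace to $\mathbb{F}_p$ and $e_p(x)=e^{2\pi i x/p}$. A Gauss sum is pure if some nonzero integral power of it is a real number (in particular $G(\chi_0)=0$ counts as pure). *)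

(* Defs.v *)
From HB Require Import structures.
From mathcomp Require Import all_boot all_order all_algebra all_field.
From mathcomp Require Import complex.
From mathcomp Require Import reals trigo.
Set Implicit Arguments. Unset Strict Implicit. Unset Printing Implicit Defensive.
Import Order.TTheory GRing.Theory Num.Theory.
Local Open Scope ring_scope.
Local Open Scope complex_scope.

Definition gp_adj (F : finFieldType) (d : nat) (x y : F) : bool :=
  (x != y) && [exists z : F, (z != 0) && (x - y == z ^+ d)].

Definition gp_clique (F : finFieldType) (d : nat) (S : {set F}) : bool :=
  [forall x in S, forall y in S, (x != y) ==> gp_adj d x y].

Definition gp_clique_number (F : finFieldType) (d : nat) : nat :=
  \max_(S : {set F} | gp_clique d S) #|S|.

Definition abs_trace (F : finFieldType) (p : nat) (c : F) : F :=
  \sum_(i < logn p #|F|) c ^+ (p ^ i).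

(** Representative in {0,...,p-1} of the trace (an element of the prime field). *)
Definition trace_nat (F : finFieldType) (p : nat) (c : F) : nat :=
  if [pick k : 'I_p | (k%:R : F) == abs_trace p c] is Some k then val k else 0%N.

Definition zeta_p (R : realType) (p : nat) : R[i] :=
  (cos (2 * pi / p%:R)) +i* (sin (2 * pi / p%:R)).

Definition add_char (R : realType) (F : finFieldType) (p : nat) (c : F) : R[i] :=
  zeta_p R p ^+ trace_nat p c.

(** A multiplicative character of F, i.e. a homomorphism F^* -> C^*
    (only its values on F^* matter; the value at 0 is fixed by convention below). *)
Definition is_mult_char (R : realType) (F : finFieldType) (chi : F -> R[i]) : Prop :=
  (forall x y : F, x != 0 -> y != 0 -> chi (x * y) = chi x * chi y) /\
  (forall x : F, x != 0 -> chi x != 0).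

Definition char_trivial (R : realType) (F : finFieldType) (chi : F -> R[i]) : bool :=
  [forall x : F, (x != 0) ==> (chi x == 1)].

(** chi^j, with the convention chi^j(0) = 0 if chi^j is nontrivial and
    chi^j(0) = 1 (= chi_0(0)) if chi^j is the trivial character chi_0. *)
Definition char_pow (R : realType) (F : finFieldType) (chi : F -> R[i]) (j : nat)
  : F -> R[i] :=
  fun x => if x == 0 then (if char_trivial (fun y => chi y ^+ j) then 1 else 0)
           else chi x ^+ j.

Definition char_order (R : realType) (F : finFieldType) (chi : F -> R[i]) (d : nat) : Prop :=
  (0 < d)%N /\ char_trivial (fun y => chi y ^+ d) /\
  (forall m : nat, (0 < m)%N -> (m < d)%N -> ~~ char_trivial (fun y => chi y ^+ m)).

Definition gauss_sum (R : realType) (F : finFieldType) (p : nat) (chi : F -> R[i]) : R[i] :=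
  \sum_(c : F) chi c * add_char R p c.

Definition pure (R : realType) (z : R[i]) : Prop :=
  exists m : int, m != 0 /\ (z ^ m) \is Num.real.

(* Main.v *)
Require Import Defs.
From HB Require Import structures.
From mathcomp Require Import all_boot all_order all_algebra all_field.
From mathcomp Require Import complex.
From mathcomp Require Import reals trigo.
From mathcomp Require Import fingroup pgroup abelian.
From mathcomp Require Import ring.
Import Order.TTheory GRing.Theory Num.Theory.
Local Open Scope ring_scope.

Module Prop36Helpers.
Local Open Scope complex_scope.
Set Implicit Arguments. Unset Strict Implicit. Unset Printing Implicit Defensive.

Lemma card_pexp (F : finFieldType) (p : nat) :
  prime p -> p \in [pchar F] -> #|F| = (p ^ logn p #|F|)%N.
Proof.
move=> pp pc.
have : pgroup p [set: F].
  by apply: abelem_pgroup; apply: fin_ring_pchar_abelem.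
rewrite /pgroup cardsT => /p_natP [k ->].
by rewrite pfactorK.
Qed.

Lemma frob_add (F : finFieldType) (p : nat) (pc : p \in [pchar F]) (x y : F) :
  (x + y) ^+ p = x ^+ p + y ^+ p.
Proof. by rewrite -!(pFrobenius_autE pc) pFrobenius_autD_comm //; apply: mulrC. Qed.

Lemma frob_exp_add (F : finFieldType) (p : nat) (pc : p \in [pchar F]) (i : nat) (x y : F) :
  (x + y) ^+ (p ^ i) = x ^+ (p ^ i) + y ^+ (p ^ i).
Proof.
elim: i => [|i IH]; first by rewrite !expr1.
by rewrite expnSr !exprM IH frob_add.
Qed.

Lemma abs_traceD (F : finFieldType) (p : nat) (pc : p \in [pchar F]) (x y : F) :
  abs_trace p (x + y) = abs_trace p x + abs_trace p y.
Proof.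
rewrite /abs_trace -big_split /=; apply: eq_bigr => i _.
exact: frob_exp_add.
Qed.

Lemma abs_trace_frob (F : finFieldType) (p : nat) (pp : prime p) (pc : p \in [pchar F]) (x : F) :
  (abs_trace p x) ^+ p = abs_trace p x.
Proof.
rewrite /abs_trace.
set n := logn p #|F|.
have fr : forall (s : seq 'I_n) , (\sum_(i <- s) x ^+ (p ^ i)) ^+ p = \sum_(i <- s) x ^+ (p ^ i.+1).
  elim=> [|a s IH]; first by rewrite !big_nil expr0n; rewrite (gtn_eqF (prime_gt0 pp)).
  by rewrite !big_cons (frob_add pc) IH expnSr exprM.
rewrite fr.
have H1 : \sum_(i < n.+1) x ^+ (p ^ i) = \sum_(i < n) x ^+ (p ^ i) + x ^+ (p ^ n).
  by rewrite big_ord_recr.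
have H2 : \sum_(i < n.+1) x ^+ (p ^ i) = x + \sum_(i < n) x ^+ (p ^ i.+1).
  by rewrite big_ord_recl expn0 expr1.
have E : x ^+ (p ^ n) = x by rewrite -card_pexp // expf_card.
by apply: (addrI x); rewrite -H2 H1 E addrC.
Qed.

Lemma natr_eq_mod (F : finFieldType) (p : nat) (pc : p \in [pchar F]) (m n : nat) :
  (m%:R = n%:R :> F) -> m = n %[mod p].
Proof.
wlog le_mn : m n / (m <= n)%N.
  move=> W E; case: (leqP m n) => h; first exact: W.
  by symmetry; apply: W; [exact: ltnW | symmetry].
move=> E; apply/eqP; by rewrite eq_sym eqn_mod_dvd // (dvdn_pcharf pc) natrB // E subrr eqxx.
Qed.

Lemma fixed_in_prime (F : finFieldType) (p : nat) (pp : prime p) (pc : p \in [pchar F]) (t : F) :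
  t ^+ p = t -> exists k : 'I_p, k%:R = t.
Proof.
move=> Ht; case: (boolP [exists k : 'I_p, (k%:R : F) == t]) => [/existsP [k /eqP Hk]|/existsPn Hn].
  by exists k.
exfalso.
pose P : {poly F} := 'X^p - 'X.
have p1 : (1 < p)%N by apply: prime_gt1.
have szP : size P = p.+1.
  by rewrite /P size_polyDl ?size_polyXn // size_polyN size_polyX ltnS.
have nzP : P != 0 by rewrite -size_poly_eq0 szP.
pose rs := t :: [seq (val k)%:R | k <- enum 'I_p].
have H := @max_poly_roots _ P rs nzP.
have rootP : forall u : F, u ^+ p = u -> root P u.
  by move=> u Hu; rewrite /root /P !hornerE Hu subrr.
have Hall : all (root P) rs.
  rewrite /= rootP //=; apply/allP => u /mapP [k _ ->].
  by apply: rootP; rewrite -(pFrobenius_autE pc) pFrobenius_aut_nat.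
have Hu : uniq rs.
  rewrite /= map_inj_uniq ?enum_uniq ?andbT.
    apply/negP => /mapP [k _ Hk]; move: (Hn k); by rewrite Hk eqxx.
  move=> k l /(natr_eq_mod pc); rewrite !modn_small //; exact: val_inj.
by move: (H Hall Hu); rewrite szP /= size_map size_enum_ord ltnn.
Qed.

Lemma trace_natE (F : finFieldType) (p : nat) (pp : prime p) (pc : p \in [pchar F]) (c : F) :
  (trace_nat p c)%:R = abs_trace p c.
Proof.
rewrite /trace_nat; case: pickP => [k /eqP -> //| H]; exfalso.
have [k Hk] := fixed_in_prime pp pc (abs_trace_frob pp pc c).
by move: (H k); rewrite Hk eqxx.
Qed.

Lemma trace_nat_add (F : finFieldType) (p : nat) (pp : prime p) (pc : p \in [pchar F]) (x y : F) :
  trace_nat p (x + y) = (trace_nat p x + trace_nat p y)%N %[mod p].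
Proof. by apply: (natr_eq_mod pc); rewrite natrD !trace_natE // abs_traceD. Qed.

Lemma zeta_exp (R : realType) (p n : nat) :
  zeta_p R p ^+ n = cos ((2 * pi / p%:R) *+ n) +i* sin ((2 * pi / p%:R) *+ n).
Proof.
elim: n => [|n IH]; first by rewrite expr0 !mulr0n cos0 sin0.
rewrite exprS IH /zeta_p.
set a := 2 * pi / p%:R.
apply/eqP; rewrite eq_complex /= mulrS cosD sinD !eqxx /=.
by rewrite addrC eqxx.
Qed.

Lemma zeta_p_exp_p (R : realType) (p : nat) : (0 < p)%N -> zeta_p R p ^+ p = 1.
Proof.
move=> p0; rewrite zeta_exp -mulr_natr mulfVK ?pnatr_eq0 -?lt0n //.
have -> : (2 * pi : R) = 0 + pi *+ 2 by rewrite add0r mulr_natl.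
by rewrite cosD2pi sinD2pi cos0 sin0.
Qed.

Definition psi (R : realType) (F : finFieldType) (p : nat) (x : F) := add_char R p x.

Lemma psiD (R : realType) (F : finFieldType) (p : nat) (pp : prime p) (pc : p \in [pchar F]) (x y : F) :
  add_char R p (x + y) = add_char R p x * add_char R p y.
Proof.
rewrite /add_char -exprD -(expr_mod _ (zeta_p_exp_p R (prime_gt0 pp))).
by rewrite (trace_nat_add pp pc) expr_mod // zeta_p_exp_p // prime_gt0.
Qed.


Lemma sum_addchar0 (K : fieldType) (F : finFieldType) (psi : F -> K)
  (Hadd : forall x y, psi (x + y) = psi x * psi y) (y0 : F) :
  psi y0 != 1 -> \sum_x psi x = 0.
Proof.
move=> Hy.
have E : \sum_x psi x = psi y0 * \sum_x psi x.
  rewrite {1}(reindex_inj (addIr y0)) mulr_sumr; apply: eq_bigr => x _.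
  by rewrite Hadd mulrC.
have : (1 - psi y0) * \sum_x psi x = 0 by rewrite mulrBl mul1r -E subrr.
by move/eqP; rewrite mulf_eq0 subr_eq0 eq_sym (negbTE Hy) /= => /eqP.
Qed.

Lemma sum_addchar0_scale (K : fieldType) (F : finFieldType) (psi : F -> K)
  (Hadd : forall x y, psi (x + y) = psi x * psi y) (y0 : F) (b : F) :
  psi y0 != 1 -> b != 0 -> \sum_x psi (b * x) = 0.
Proof.
move=> Hy Hb; have H := sum_addchar0 Hadd Hy.
by rewrite (reindex_inj (mulfI Hb)) in H.
Qed.

Lemma sum_multchar0 (K : fieldType) (F : finFieldType) (cp : F -> K)
  (Hmul : forall x y, cp (x * y) = cp x * cp y) (a : F) :
  a != 0 -> cp a != 1 -> \sum_x cp x = 0.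
Proof.
move=> Ha Hy.
have E : \sum_x cp x = cp a * \sum_x cp x.
  rewrite {1}(reindex_inj (mulfI Ha)) mulr_sumr; apply: eq_bigr => x _.
  by rewrite Hmul.
have : (1 - cp a) * \sum_x cp x = 0 by rewrite mulrBl mul1r -E subrr.
by move/eqP; rewrite mulf_eq0 subr_eq0 eq_sym (negbTE Hy) /= => /eqP.
Qed.

Lemma pure_of_real (R : realType) (z : R[i]) : z \is Num.real -> pure z.
Proof. by move=> Hz; exists 1; split => //; rewrite expr1z. Qed.

Lemma pure_of_exp (R : realType) (z : R[i]) (d : nat) :
  (0 < d)%N -> z ^+ d \is Num.real -> pure z.
Proof.
move=> d0 Hz; exists d%:Z; split; first by rewrite eqz_nat -lt0n.
by rewrite -exprnP.
Qed.

Section Chi.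
Variables (R : realType) (F : finFieldType) (chi : F -> R[i]).
Hypothesis Hchi : is_mult_char chi.

Lemma chi1 : chi 1 = 1.
Proof.
case: Hchi => M nz.
have E : chi 1 * 1 = chi 1 * chi 1 by rewrite -M ?mulr1 ?oner_neq0.
by symmetry; apply: (mulfI (nz 1 (oner_neq0 F))).
Qed.

Lemma chiX (x : F) n : x != 0 -> chi (x ^+ n) = chi x ^+ n.
Proof.
case: Hchi => M nz xn0; elim: n => [|n IH]; first by rewrite !expr0 chi1.
by rewrite !exprS M ?IH // expf_neq0.
Qed.

Lemma chiV1 (x : F) : x != 0 -> chi x = 1 -> chi x^-1 = 1.
Proof.
case: Hchi => M nz xn0 cx.
have := chi1; rewrite -(mulVf xn0) M ?invr_eq0 // cx mulr1 //.
Qed.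

End Chi.

End Prop36Helpers.
Import Prop36Helpers.

Theorem proposition3p6 (R : realType) (F : finFieldType) (p d r : nat)
  (chi : F -> R[i]) :
  (1 < d)%N ->
  prime p -> odd p -> p \in [pchar F] ->
  #|F| = (r ^ 2)%N ->
  (#|F| %% (2 * d) = 1)%N ->
  is_mult_char chi -> char_order chi d ->
  gp_clique_number F d = r ->
  forall j : nat, (0 < j)%N -> pure (gauss_sum p (char_pow chi j)).
Proof.
move=> d1 pp podd pc cardF qmod Hchi [d0 [chid chimin]] omega j j0.
have [chiM chinz] := Hchi.
rewrite /gauss_sum.
set psi := @add_char R F p.
have Hadd : forall x y : F, psi (x + y) = psi x * psi y by move=> x y; exact: psiD.
have zeta_nz : zeta_p R p != 0.
  apply/eqP => z0; have := zeta_p_exp_p R (prime_gt0 pp).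
  by rewrite z0 expr0n gtn_eqF ?prime_gt0 // => /eqP; rewrite eq_sym oner_eq0.
have psi_nz x : psi x != 0 by rewrite /psi /add_char expf_neq0.
have psi0 : psi 0 = 1.
  have := Hadd 0 0; rewrite addr0 => E.
  by apply: (mulfI (psi_nz 0)); rewrite mulr1 -E.
set cp := char_pow chi j.
have chid' : forall x, x != 0 -> chi x ^+ d = 1.
  by move/forallP: chid => H x xn; move/implyP: (H x) => /(_ xn)/eqP.
case: (boolP (char_trivial (fun y => chi y ^+ j))) => [triv | ntriv].
  have cpE : forall x, cp x = 1.
    move=> x; rewrite /cp /char_pow triv; case: eqP => // /eqP xn.
    by move/forallP: triv => /(_ x)/implyP/(_ xn)/eqP.
  apply: pure_of_real.
  rewrite (eq_bigr (fun c => psi c)) => [|c _]; last by rewrite cpE mul1r.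
  case: (boolP [forall y, psi y == 1]) => [/forallP ptriv | /forallPn [y0 /= hy0]].
    rewrite (eq_bigr (fun _ => 1)) => [|c _]; last exact/eqP.
    by rewrite sumr_const realn.
  by rewrite (sum_addchar0 Hadd hy0) real0.
have cp0 : cp 0 = 0 by rewrite /cp /char_pow eqxx (negbTE ntriv).
have cpx : forall x, x != 0 -> cp x = chi x ^+ j.
  by move=> x xn; rewrite /cp /char_pow (negbTE xn).
have cpM : forall x y, cp (x * y) = cp x * cp y.
  move=> x y; case: (eqVneq x 0) => [-> | xn]; first by rewrite mul0r cp0 mul0r.
  case: (eqVneq y 0) => [-> | yn]; first by rewrite mulr0 cp0 mulr0.
  by rewrite !cpx ?mulf_neq0 // chiM // exprMn.
have [a0 a0n cpa] : exists2 a, a != 0 & cp a != 1.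
  move/forallPn: ntriv => [a /=]; rewrite negb_imply => /andP [an ca].
  by exists a; rewrite ?cpx.
have sumcp : \sum_x cp x = 0 := sum_multchar0 cpM a0n cpa.
case: (boolP [forall y, psi y == 1]) => [/forallP ptriv | /forallPn [y0 /= hy0]].
  apply: pure_of_real; rewrite (eq_bigr cp) ?sumcp ?real0 // => c _.
  by rewrite (eqP (ptriv c)) mulr1.
set G := \sum_c cp c * psi c.
have r2 : (2 <= r)%N.
  have := finNzRing_gt1 F; rewrite cardF.
  by case: (r) => [|[|k]].
have [S Sc Sr] : exists2 S : {set F}, gp_clique d S & #|S| = r.
  have hpos : (0 < #|@gp_clique F d|)%N.
    apply/card_gt0P; exists set0; rewrite /in_mem /= /gp_clique.
    by apply/forall_inP => x; rewrite inE.
  have [S SA SE] := eq_bigmax_cond (fun S : {set F} => #|S|) hpos.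
  exists S => //; rewrite -omega /gp_clique_number -SE.
  by [].
have [c0 c0S] : exists c0, c0 \in S.
  by apply/card_gt0P; rewrite Sr; apply: leq_trans r2.
pose C := [set x - c0 | x in S].
have Cr : #|C| = r by rewrite card_imset ?Sr //; exact: addIr.
have C0 : 0 \in C by apply/imsetP; exists c0 => //; rewrite subrr.
have Hcl : forall x y, x \in C -> y \in C -> x != y -> chi (x - y) = 1.
  move=> x y /imsetP [x' x'S ->] /imsetP [y' y'S ->] nxy.
  have nxy' : x' != y' by apply: contraNneq nxy => ->.
  move/forall_inP: Sc => /(_ x' x'S)/forall_inP/(_ y' y'S)/implyP/(_ nxy').
  move=> /andP [_ /existsP [z /andP [zn /eqP E]]].
  have -> : x' - c0 - (y' - c0) = x' - y' by ring.
  by rewrite E (chiX Hchi) // chid'.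
have Hcl0 : forall c, c \in C -> c != 0 -> chi c = 1.
  by move=> c cC cn; rewrite -(subr0 c); apply: Hcl.
pose Sf b := \sum_(c in C) psi (b * c).
have sumset : forall a b, a != 0 -> chi a != 1 -> b != 0 -> Sf b * Sf (a * b) = 0.
  move=> a b an ca bn.
  pose f := fun u : F * F => u.1 + a * u.2.
  have finj : {in setX C C &, injective f}.
    move=> [x1 x2] [y1 y2]; rewrite !in_setX /= => /andP [x1C x2C] /andP [y1C y2C].
    rewrite /f /= => E.
    case: (eqVneq x2 y2) => [e2 | n2].
      by move: E; rewrite e2 => /addIr ->.
    exfalso.
    have E' : x1 - y1 = a * (y2 - x2).
      by rewrite -[x1](addrK (a * x2)) E; ring.
    have n1 : x1 != y1.
      apply/eqP => e1; move: E'; rewrite e1 subrr => /esym/eqP.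
      by rewrite mulf_eq0 (negbTE an) subr_eq0 eq_sym (negbTE n2).
    have h1 := Hcl _ _ x1C y1C n1.
    have h2 : chi (y2 - x2) = 1 by apply: Hcl => //; rewrite eq_sym.
    rewrite E' chiM // ?h2 ?mulr1 in h1; last by rewrite subr_eq0 eq_sym.
    by rewrite h1 eqxx in ca.
  have fim : f @: setX C C = setT.
    apply/eqP; rewrite eqEcard subsetT cardsT card_in_imset // cardsX Cr cardF.
    by rewrite mulnn leqnn.
  have := sum_addchar0_scale Hadd hy0 bn.
  rewrite (eq_bigl (fun x => x \in f @: setX C C)) => [|x]; last by rewrite fim inE.
  rewrite big_imset //= => <-.
  rewrite /Sf big_distrl /=.
  under eq_bigr do rewrite big_distrr /=.
  rewrite pair_big_dep /=.
  apply: eq_big => [[u1 u2]|[u1 u2] _]; first by rewrite in_setX.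
  by rewrite /f /= mulrDr Hadd mulrCA mulrA.
have sumS : \sum_b Sf b = #|F|%:R.
  rewrite /Sf exchange_big /= (bigD1 0) //=.
  rewrite [X in _ + X]big1 => [|c /andP [cC cn]].
    rewrite addr0 (eq_bigr (fun _ => 1)) => [|b _]; last by rewrite mulr0 psi0.
    by rewrite sumr_const.
  rewrite (eq_bigr (fun b => psi (c * b))) ?(sum_addchar0_scale Hadd hy0 cn) // => b _.
  by rewrite mulrC.
have S0 : Sf 0 = r%:R.
  by rewrite /Sf (eq_bigr (fun _ => 1)) ?sumr_const ?Cr // => c _; rewrite mul0r psi0.
have [b0 b0n Sb0] : exists2 b0, b0 != 0 & Sf b0 != 0.
  case: (boolP [exists b, (b != 0) && (Sf b != 0)]) => [/existsP [b /andP [h1 h2]] | /existsPn H].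
    by exists b.
  exfalso.
  have : \sum_b Sf b = Sf 0.
    rewrite (bigD1 0) //= big1 ?addr0 // => b bn.
    by move: (H b); rewrite bn /= negbK => /eqP.
  rewrite sumS S0 => /eqP; rewrite eqr_nat cardF => /eqP E.
  have : (r * 2 <= r * r)%N by rewrite leq_mul2l r2 orbT.
  rewrite mulnn E muln2 -addnn -{3}[r]addn0 leq_add2l leqn0 => /eqP r0.
  by rewrite r0 in r2.
have key : forall b, b != 0 -> Sf b != 0 -> chi b = chi b0.
  move=> b bn Sbn; set a := b / b0.
  have an : a != 0 by rewrite mulf_neq0 ?invr_eq0.
  have ab : a * b0 = b by rewrite /a divfK.
  case: (eqVneq (chi a) 1) => [ca | ca].
    by rewrite -ab chiM // ca mul1r.
  have := sumset a b0 an ca b0n; rewrite ab => /eqP.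
  by rewrite mulf_eq0 (negbTE Sb0) (negbTE Sbn).
have LHS1 : \sum_b cp b * Sf b = chi b0 ^+ j * (#|F|%:R - r%:R).
  have -> : (#|F|%:R - r%:R : R[i]) = \sum_(b | b != 0) Sf b.
    by rewrite -sumS -S0 (bigD1 0) //= addrC addrK.
  rewrite (bigD1 0) //= cp0 mul0r add0r mulr_sumr; apply: eq_bigr => b bn.
  case: (eqVneq (Sf b) 0) => [-> | Sbn]; first by rewrite !mulr0.
  by rewrite cpx // key.
have LHS2 : \sum_b cp b * Sf b = G *+ r - G.
  rewrite /Sf; under eq_bigr do rewrite mulr_sumr.
  rewrite exchange_big /=.
  transitivity (\sum_(c in C) (G - (c == 0)%:R * G)).
    apply: eq_bigr => c cC; case: (eqVneq c 0) => [-> | cn].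
      rewrite mul1r subrr (eq_bigr (fun b => cp b)) ?sumcp // => b _.
      by rewrite mulr0 psi0 mulr1.
    rewrite mul0r subr0 /G [LHS](reindex_inj (mulIf (invr_neq0 cn))) /=.
    apply: eq_bigr => x _.
    rewrite mulfVK // cpM (cpx c^-1) ?invr_eq0 // (chiV1 Hchi cn (Hcl0 c cC cn)).
    by rewrite expr1n mulr1.
  rewrite sumrB sumr_const Cr (bigD1 0) //= eqxx mul1r big1 ?addr0 // => c /andP [_ cn].
  by rewrite (negbTE cn) mul0r.
have Gval : G = chi b0 ^+ j * r%:R.
  have E := etrans (esym LHS2) LHS1.
  have rn1 : (r%:R - 1 : R[i]) != 0.
    rewrite subr_eq0 pnatr_eq1; by case: (r) r2 => [|[|k]].
  apply: (mulIf rn1).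
  have -> : G * (r%:R - 1) = G *+ r - G by rewrite mulrBr mulr1 mulr_natr.
  rewrite E cardF natrX; ring.
apply: (pure_of_exp d0).
rewrite Gval exprMn -exprM mulnC exprM chid' // expr1n mul1r.
by rewrite rpredX // realn.
Qed.
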